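(* Let $r>0$, $d>0$ with $d\sqrt{2}<r$, and let $X\subseteq\mathbb{R}^2$ be a bounded $r$-regular set whose boundary contains no point of $d\mathbb{Z}^2$. Consider a $3\times 3$ block of pixels of the lattice $d\mathbb{Z}^2$ whose middle pixel is grey. Then at least one of the 8 other pixels of the block is not grey.
   Context: A closed set $X\subseteq\mathbb{R}^2$ is $r$-regular if for each $x\in\partial X$ there are two open balls of radius $r$, $B_r(x_b)\subseteq X$ and $B_r(x_w)\subseteq \mathbb{R}^2\setminus X$, with $\overline{B_r(x_b)}\cap\overline{B_r(x_w)}=\{x\}$. Pixels are the closed squares $[dk,d(k+1)]\times[dl,d(l+1)]$, $k,l\in\mathbb{Z}$. A pixel $P$ is black if $\mathrm{area}(X\cap P)=d^2$, white if $\mathrm{area}(X\cap P)=0$, and grey otherwise. *)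

(* Defs.v *)
(* The plane R^2 is modelled as R * R (R : realType),
   with its product topology (= Euclidean topology) and area given by the
   product Lebesgue measure lebesgue_measure \x lebesgue_measure. *)
From HB Require Import structures.
From mathcomp Require Import all_boot all_order all_algebra.
From mathcomp Require Import all_classical all_reals all_analysis.
Set Implicit Arguments. Unset Strict Implicit. Unset Printing Implicit Defensive.
Import Order.TTheory GRing.Theory Num.Theory.
Import numFieldNormedType.Exports.
Local Open Scope classical_set_scope.
Local Open Scope ring_scope.

Definition dist2 {R : realType} (x y : R * R) : R :=
  (x.1 - y.1) ^+ 2 + (x.2 - y.2) ^+ 2.

Definition eball {R : realType} (c : R * R) (r : R) : set (R * R) :=
  [set y | dist2 y c < r ^+ 2].

Definition ecball {R : realType} (c : R * R) (r : R) : set (R * R) :=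
  [set y | dist2 y c <= r ^+ 2].

Definition bdry {R : realType} (X : set (R * R)) : set (R * R) :=
  closure X `\` interior X.

Definition bounded2 {R : realType} (X : set (R * R)) : Prop :=
  exists M : R, forall x, X x -> `|x.1| <= M /\ `|x.2| <= M.

Definition r_regular {R : realType} (r : R) (X : set (R * R)) : Prop :=
  closed X /\
  forall x, bdry X x ->
    exists xb xw : R * R,
      eball xb r `<=` X /\ eball xw r `<=` ~` X /\
      ecball xb r `&` ecball xw r = [set x].

Definition pixel {R : realType} (d : R) (k l : int) : set (R * R) :=
  [set p | d * k%:~R <= p.1 <= d * (k + 1)%:~R /\
           d * l%:~R <= p.2 <= d * (l + 1)%:~R].

Definition area {R : realType} (A : set (R * R)) : \bar R :=
  ((@lebesgue_measure R) \x (@lebesgue_measure R)) A.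

Definition black {R : realType} (X : set (R * R)) (d : R) (k l : int) : Prop :=
  area (X `&` pixel d k l) = (d ^+ 2)%:E.
Definition white {R : realType} (X : set (R * R)) (d : R) (k l : int) : Prop :=
  area (X `&` pixel d k l) = 0%E.
Definition grey {R : realType} (X : set (R * R)) (d : R) (k l : int) : Prop :=
  ~ black X d k l /\ ~ white X d k l.

(* Main.v *)
Require Import Defs.
From HB Require Import structures.
From mathcomp Require Import all_boot all_order all_algebra.
From mathcomp Require Import all_classical all_reals all_analysis.
From mathcomp Require Import ring lra.
Import Order.TTheory GRing.Theory Num.Theory.
Import numFieldNormedType.Exports.
Local Open Scope classical_set_scope.
Local Open Scope ring_scope.
Lemma area_pixel (R : realType) (d : R) (k l : int) : 0 < d ->
  area (pixel d k l) = (d ^+ 2)%:E.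
Proof.
move=> d0.
have -> : pixel d k l = `[d * k%:~R, d * (k + 1)%:~R] `*` `[d * l%:~R, d * (l + 1)%:~R].
  by apply/seteqP; split=> p /=; rewrite !in_itv /=.
rewrite /area product_measure1E //.
have h1 := @lebesgue_measure_itv R `[d * k%:~R, d * (k + 1)%:~R].
have h2 := @lebesgue_measure_itv R `[d * l%:~R, d * (l + 1)%:~R].
transitivity (d%:E * d%:E)%E; last by rewrite -EFinM expr2.
congr (_ * _)%E.
  apply: etrans h1 _.
  by rewrite /= !lte_fin !intrD !mulrDr !mulr1 !ltrDl d0 /= -EFinD; congr (_%:E); ring.
apply: etrans h2 _.
by rewrite /= !lte_fin !intrD !mulrDr !mulr1 !ltrDl d0 /= -EFinD; congr (_%:E); ring.
Qed.

Lemma area0 (R : realType) : area (@set0 (R * R)) = 0%E.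
Proof. by rewrite /area measure0. Qed.
Lemma ecball_closure (R : realType) (z : R * R) (r : R) : 0 < r ->
  ecball z r `<=` closure (eball z r).
Proof.
move=> r0 y yc B /nbhs_ballP [e /= e0 eB].
have n1 := normr_ge0 (z.1 - y.1).
have n2 := normr_ge0 (z.2 - y.2).
pose M : R := `|z.1 - y.1| + `|z.2 - y.2| + 1.
have M0 : 0 < M by rewrite /M; lra.
have eM : 0 < e + M by lra.
pose t : R := e / (e + M).
have t0 : 0 < t by rewrite /t divr_gt0.
have t1 : t < 1 by rewrite /t ltr_pdivrMr // mul1r; lra.
have tM : t * M < e.
  by rewrite /t mulrAC ltr_pdivrMr //; nra.
exists (y.1 + t * (z.1 - y.1), y.2 + t * (z.2 - y.2)); split.
  rewrite /eball /ecball /dist2 /= in yc *.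
  have -> : (y.1 + t * (z.1 - y.1) - z.1) ^+ 2 + (y.2 + t * (z.2 - y.2) - z.2) ^+ 2
    = (1 - t) ^+ 2 * ((y.1 - z.1) ^+ 2 + (y.2 - z.2) ^+ 2) by ring.
  have h : 0 < (1 - t) ^+ 2 < 1.
    rewrite exprn_gt0 ?subr_gt0 //= expr2; nra.
  case/andP: h => h1 h2.
  have r2 : 0 < r ^+ 2 by rewrite exprn_gt0.
  apply: (le_lt_trans (y := (1 - t) ^+ 2 * r ^+ 2)); first by rewrite ler_pM2l.
  by rewrite gtr_pMl.
have e1 : forall a b : R, `|a - (a + t * (b - a))| = t * `|b - a|.
  by move=> a b; rewrite opprD addrA subrr sub0r normrN normrM gtr0_norm.
apply: eB; split; rewrite /= -ball_normE /ball_ /=.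
rewrite e1; rewrite /M in tM; nra.
rewrite e1; rewrite /M in tM; nra.
Qed.
Lemma bdry_seg (R : realType) (X : set (R * R)) (a b : R * R) :
  closed X -> X a -> ~ X b ->
  exists t : R, 0 <= t <= 1 /\
    bdry X (a.1 + t * (b.1 - a.1), a.2 + t * (b.2 - a.2)).
Proof.
move=> cX Xa Xb; apply: contrapT => H.
pose f := fun t : R => (a.1 + t * (b.1 - a.1), a.2 + t * (b.2 - a.2)).
have cf : continuous f.
  move=> t; rewrite /f /continuous_at /=.
  apply: (@cvg_pair _ _ _ _ (nbhs (a.1 + t * (b.1 - a.1))) (nbhs (a.2 + t * (b.2 - a.2)))).
    by apply: cvgD; [exact: cvg_cst | apply: cvgMl; exact: cvg_id].
  by apply: cvgD; [exact: cvg_cst | apply: cvgMl; exact: cvg_id].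
have cf' : {within `[0, 1]%classic, continuous f}.
  exact: continuous_subspaceT.
have cS := @connected_continuous_connected R (R * R)%type `[0, 1]%classic f (@segment_connected R 0 1) cf'.
move: cS; apply/connectedPn.
exists (fun c => if c then [set f x | x in `[0, 1]] `&` X else [set f x | x in `[0, 1]] `\` X); split.
- case.
    exists a; split => //; exists 0.
      by rewrite /= in_itv /= lexx ler01.
    by rewrite /f !mul0r !addr0 -surjective_pairing.
  exists b; split => //; exists 1.
    by rewrite /= in_itv /= lexx ler01.
  by rewrite /f !mul1r ![a.1 + _]addrC ![a.2 + _]addrC !subrK -surjective_pairing.
- apply/seteqP; split => y /=.
    by case: (pselect (X y)) => Xy Sy; [right|left].
  by case=> -[].
split.
  apply/seteqP; split => // y [cy [Sy Xy]].
  have iy : interior X y.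
    apply: contrapT => niy; apply: H.
    case: Sy => t t01 ft; exists t; split.
      by move: t01; rewrite /= in_itv /=.
    rewrite -/(f t) ft; split => //; exact: subset_closure.
  have [z [[_ nXz] Xz]] := cy X iy.
  exact: nXz.
apply/seteqP; split => // y [[_ nXy] cy].
apply: nXy; rewrite (closure_id X).1 //.
by apply: closure_subset cy => z [].
Qed.
Lemma conv_key (R : realType) (x q y : R * R) (lam : R) :
  lam * dist2 y q + (1 - lam) * ((y.1 - (x.1 + lam * (q.1 - x.1)) - lam * (x.1 - q.1)) ^+ 2
      + (y.2 - (x.2 + lam * (q.2 - x.2)) - lam * (x.2 - q.2)) ^+ 2)
  = dist2 y (x.1 + lam * (q.1 - x.1), x.2 + lam * (q.2 - x.2)) + lam * (1 - lam) * dist2 x q.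
Proof. rewrite /dist2 /=; ring. Qed.

Lemma conv_ball (R : realType) (x q y : R * R) (lam R2 : R) :
  0 < lam -> lam <= 1 -> dist2 x q <= R2 ->
  dist2 y (x.1 + lam * (q.1 - x.1), x.2 + lam * (q.2 - x.2)) <= lam ^+ 2 * R2 ->
  dist2 y q <= R2.
Proof.
move=> l0 l1 hx hy.
have k := @conv_key _ x q y lam.
set S := (_ ^+ 2 + _ ^+ 2) in k.
have S0 : 0 <= S by rewrite /S addr_ge0 // sqr_ge0.
have h1 : 0 <= (1 - lam) * S by rewrite mulr_ge0 // subr_ge0.
have h2 : lam * (1 - lam) * dist2 x q <= lam * (1 - lam) * R2.
  by rewrite ler_wpM2l // mulr_ge0 // ?subr_ge0 // ltW.
have : lam * dist2 y q <= lam * R2.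
  have e : lam * R2 = lam ^+ 2 * R2 + lam * (1 - lam) * R2 by ring.
  rewrite e; lra.
by rewrite ler_pM2l.
Qed.
Lemma pixelE (R : realType) (d : R) (K L : int) (p : R * R) :
  pixel d K L p <-> (d * K%:~R <= p.1 <= d * K%:~R + d /\ d * L%:~R <= p.2 <= d * L%:~R + d).
Proof. by rewrite /pixel /= !intrD !mulrDr !mulr1. Qed.

Lemma coord_sq (R : realType) (d lo a b : R) :
  lo <= a <= lo + d -> lo <= b <= lo + d -> (a - b) ^+ 2 <= d ^+ 2.
Proof. move=> /andP[h1 h2] /andP[h3 h4]; rewrite !expr2; nra. Qed.

Lemma coord_eq (R : realType) (d lo a b : R) :
  0 < d -> lo <= a <= lo + d -> lo <= b <= lo + d -> (a - b) ^+ 2 = d ^+ 2 ->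
  a = lo \/ a = lo + d.
Proof.
move=> d0 /andP[h1 h2] /andP[h3 h4] e.
have : (a - b - d) * (a - b + d) = 0 by rewrite -[RHS](subrr (d ^+ 2)) -{1}e; ring.
move/eqP; rewrite mulf_eq0 => /orP[/eqP h|/eqP h].
  right; lra.
left; lra.
Qed.

Lemma idx1 (R : realType) (d c : R) (K : int) : 0 < d ->
  d * K%:~R - d <= c <= d * K%:~R + d + d ->
  exists i : int, -1 <= i <= 1 /\ d * (K + i)%:~R <= c <= d * (K + i)%:~R + d.
Proof.
move=> d0 /andP[h1 h2].
case: (lerP c (d * K%:~R)) => c1.
  exists (-1); split => //; rewrite intrD mulrDr mulrN1; apply/andP; split; lra.
case: (lerP c (d * K%:~R + d)) => c2.
  exists 0; split => //; rewrite addr0; apply/andP; split; lra.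
exists 1; split => //; rewrite intrD mulrDr mulr1; apply/andP; split; lra.
Qed.

Lemma sel1 (R : realType) (d x v : R) (K : int) : 0 < d ->
  d * K%:~R <= x <= d * K%:~R + d -> v ^+ 2 <= 2 * d ^+ 2 ->
  (x - (d * K%:~R + d / 2)) * v <= 0 ->
  d * K%:~R - d <= x + v <= d * K%:~R + d + d.
Proof.
move=> d0 /andP[h1 h2] hv hs.
have hv' : v < 3 / 2 * d /\ - (3 / 2 * d) < v.
  split; rewrite expr2 in hv; nra.
case: hv' => hv1 hv2.
apply/andP; split; nra.
Qed.

Lemma sel0 (R : realType) (d x v : R) (K : int) : 0 < d ->
  d * K%:~R <= x <= d * K%:~R + d -> v ^+ 2 <= d ^+ 2 ->
  d * K%:~R - d <= x + v <= d * K%:~R + d + d.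
Proof.
move=> d0 /andP[h1 h2] hv.
have [hv1 hv2] : v <= d /\ - d <= v by split; rewrite !expr2 in hv; nra.
apply/andP; split; lra.
Qed.

Lemma sel2 (R : realType) (d x1 x2 v1 v2 : R) (K L : int) : 0 < d ->
  d * K%:~R <= x1 <= d * K%:~R + d -> d * L%:~R <= x2 <= d * L%:~R + d ->
  v1 ^+ 2 + v2 ^+ 2 <= 2 * d ^+ 2 ->
  exists s : bool,
    d * K%:~R - d <= x1 + (if s then v1 else - v1) <= d * K%:~R + d + d /\
    d * L%:~R - d <= x2 + (if s then v2 else - v2) <= d * L%:~R + d + d.
Proof.
move=> d0 h1 h2 hv.
have s1 := sqr_ge0 v1; have s2 := sqr_ge0 v2.
case: (lerP (v1 ^+ 2) (d ^+ 2)) => c1; case: (lerP (v2 ^+ 2) (d ^+ 2)) => c2.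
- by exists true; split; apply: sel0.
- have c1' : (- v1) ^+ 2 <= d ^+ 2 by rewrite sqrrN.
  have c2' : v2 ^+ 2 <= 2 * d ^+ 2 by lra.
  have c2'' : (- v2) ^+ 2 <= 2 * d ^+ 2 by rewrite sqrrN.
  case: (lerP ((x2 - (d * L%:~R + d / 2)) * v2) 0) => sg.
    by exists true; split; [apply: sel0 | apply: sel1].
  exists false; split; [apply: sel0 => // | apply: sel1 => //].
  rewrite mulrN oppr_le0; exact: ltW.
- have c2' : (- v2) ^+ 2 <= d ^+ 2 by rewrite sqrrN.
  have c1' : v1 ^+ 2 <= 2 * d ^+ 2 by lra.
  have c1'' : (- v1) ^+ 2 <= 2 * d ^+ 2 by rewrite sqrrN.
  case: (lerP ((x1 - (d * K%:~R + d / 2)) * v1) 0) => sg.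
    by exists true; split; [apply: sel1 | apply: sel0].
  exists false; split; [apply: sel1 => // | apply: sel0 => //].
  rewrite mulrN oppr_le0; exact: ltW.
- exfalso; lra.
Qed.

Lemma grey_bdry (R : realType) (X : set (R * R)) (d : R) (k l : int) :
  0 < d -> closed X -> grey X d k l -> exists x, pixel d k l x /\ bdry X x.
Proof.
move=> d0 cX [nb nw].
have [a [Xa Pa]] : exists a, X a /\ pixel d k l a.
  apply: contrapT => H; apply: nw; rewrite /white.
  have -> : X `&` pixel d k l = set0.
    by apply/seteqP; split => // y [Xy Py]; apply: H; exists y.
  exact: area0.
have [b [Pb Xb]] : exists b, pixel d k l b /\ ~ X b.
  apply: contrapT => H; apply: nb; rewrite /black.
  have -> : X `&` pixel d k l = pixel d k l.
    apply/seteqP; split => y; first by case.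
    move=> Py; split => //; apply: contrapT => nXy; apply: H; exists y; done.
  exact: area_pixel.
have [t [t01 bt]] := @bdry_seg _ X a b cX Xa Xb.
exists (a.1 + t * (b.1 - a.1), a.2 + t * (b.2 - a.2)); split => //.
move/pixelE: Pa => [/andP[a1 a2] /andP[a3 a4]].
move/pixelE: Pb => [/andP[b1 b2] /andP[b3 b4]].
case/andP: t01 => t0 t1.
apply/pixelE => /=; split; apply/andP; split; nra.
Qed.

Lemma conv_ball_lt (R : realType) (x q y : R * R) (lam R2 : R) :
  0 < lam -> lam <= 1 -> dist2 x q <= R2 ->
  dist2 y (x.1 + lam * (q.1 - x.1), x.2 + lam * (q.2 - x.2)) < lam ^+ 2 * R2 ->
  dist2 y q < R2.
Proof.
move=> l0 l1 hx hy.
have k := @conv_key _ x q y lam.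
set S := (_ ^+ 2 + _ ^+ 2) in k.
have S0 : 0 <= S by rewrite /S addr_ge0 // sqr_ge0.
have h1 : 0 <= (1 - lam) * S by rewrite mulr_ge0 // subr_ge0.
have h2 : lam * (1 - lam) * dist2 x q <= lam * (1 - lam) * R2.
  by rewrite ler_wpM2l // mulr_ge0 // ?subr_ge0 // ltW.
have : lam * dist2 y q < lam * R2.
  have e : lam * R2 = lam ^+ 2 * R2 + lam * (1 - lam) * R2 by ring.
  rewrite e; lra.
by rewrite ltr_pM2l.
Qed.

Theorem lemma3p4 (R : realType) (r d : R) (X : set (R * R)) :
  0 < r -> 0 < d -> d * Num.sqrt 2 < r ->
  bounded2 X -> r_regular r X ->
  (forall k l : int, ~ bdry X (d * k%:~R, d * l%:~R)) ->
  forall k l : int, grey X d k l ->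
  exists i j : int,
    [/\ -1 <= i <= 1, -1 <= j <= 1, (i, j) != (0, 0)
      & ~ grey X d (k + i) (l + j)].
Proof.
move=> r0 d0 hdr _ [cX reg] nolat k l g.
have [x [Px bx]] := @grey_bdry _ X d k l d0 cX g.
have [xb [xw [hb [hw hI]]]] := reg x bx.
have [xbx xwx] : ecball xb r x /\ ecball xw r x.
  have : (ecball xb r `&` ecball xw r) x by rewrite hI.
  by case.
have [m1 m2] : 2 * x.1 = xb.1 + xw.1 /\ 2 * x.2 = xb.2 + xw.2.
  pose m := ((xb.1 + xw.1) / 2, (xb.2 + xw.2) / 2).
  have e1 : dist2 m xb = (dist2 x xb + dist2 x xw) / 2 - dist2 x m.
    by rewrite /dist2 /m /=; field.
  have e2 : dist2 m xw = (dist2 x xb + dist2 x xw) / 2 - dist2 x m.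
    by rewrite /dist2 /m /=; field.
  have dm : 0 <= dist2 x m by rewrite /dist2 addr_ge0 // sqr_ge0.
  have : (ecball xb r `&` ecball xw r) m.
    rewrite /ecball /= e1 e2 in xbx xwx *; split; lra.
  by rewrite hI => mx; rewrite -mx /m /=; split; field.
have s2p : 0 < Num.sqrt (2 : R) by rewrite sqrtr_gt0.
have s2sq : Num.sqrt (2 : R) ^+ 2 = 2 by rewrite sqr_sqrtr.
pose lam := d * Num.sqrt 2 / r.
have l0 : 0 < lam by rewrite /lam divr_gt0 // mulr_gt0.
have l1 : lam <= 1 by rewrite /lam ler_pdivrMr // mul1r ltW.
have lr : lam ^+ 2 * r ^+ 2 = 2 * d ^+ 2.
  rewrite /lam -exprMn divfK; last by rewrite gt_eqF.
  rewrite exprMn s2sq; ring.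
pose v1 := lam * (xb.1 - x.1).
pose v2 := lam * (xb.2 - x.2).
have hv : v1 ^+ 2 + v2 ^+ 2 <= 2 * d ^+ 2.
  have -> : v1 ^+ 2 + v2 ^+ 2 = lam ^+ 2 * dist2 x xb by rewrite /v1 /v2 /dist2; ring.
  rewrite -lr ler_wpM2l ?sqr_ge0 //.
move/pixelE: (Px) => [px1 px2].
have [s [hs1 hs2]] := @sel2 _ d x.1 x.2 v1 v2 k l d0 px1 px2 hv.
have [i [hi hci]] := @idx1 _ d _ k d0 hs1.
have [j [hj hcj]] := @idx1 _ d _ l d0 hs2.
set c := (x.1 + (if s then v1 else - v1), x.2 + (if s then v2 else - v2)).
have Pc : pixel d (k + i) (l + j) c by apply/pixelE.
have hyc : forall y, pixel d (k + i) (l + j) y -> dist2 y c <= 2 * d ^+ 2.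
  move=> y /pixelE [y1 y2].
  have := @coord_sq _ _ _ _ _ y1 hci; have := @coord_sq _ _ _ _ _ y2 hcj.
  rewrite /dist2 /c /=; lra.
have lat : forall (K L : int) (p : R * R),
    (p.1 = d * K%:~R \/ p.1 = d * K%:~R + d) ->
    (p.2 = d * L%:~R \/ p.2 = d * L%:~R + d) -> ~ bdry X p.
  have hS : forall K : int, d * K%:~R + d = d * (K + 1)%:~R.
    by move=> K; rewrite intrD mulrDr mulr1.
  move=> K L p h1 h2; rewrite (surjective_pairing p).
  by case: h1 => ->; case: h2 => ->; rewrite ?hS; apply: nolat.
have ng : ~ grey X d (k + i) (l + j).
  move: Pc hyc; rewrite /c; case: s {hs1 hs2 hci hcj c} => Pc hyc.
  - move=> [nb _]; apply: nb; rewrite /black.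
    have -> : X `&` pixel d (k + i) (l + j) = pixel d (k + i) (l + j).
      apply/seteqP; split => y; first by case.
      move=> Py; split => //.
      have hy : dist2 y xb <= r ^+ 2.
        apply: (@conv_ball _ x xb y lam) => //.
        rewrite lr; exact: hyc y Py.
      have : closure X y.
        apply: (closure_subset hb); exact: (@ecball_closure _ xb r r0 y hy).
      by rewrite -(closure_id X).1.
    exact: area_pixel.
  - move=> [_ nw]; apply: nw; rewrite /white.
    have hc : (x.1 + - v1, x.2 + - v2) =
              (x.1 + lam * (xw.1 - x.1), x.2 + lam * (xw.2 - x.2)).
      rewrite /v1 /v2; congr (_, _); apply/eqP; rewrite -subr_eq0; apply/eqP.
        have -> : x.1 + - (lam * (xb.1 - x.1)) - (x.1 + lam * (xw.1 - x.1))
                  = lam * (2 * x.1 - (xb.1 + xw.1)) by ring.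
        by rewrite m1 subrr mulr0.
      have -> : x.2 + - (lam * (xb.2 - x.2)) - (x.2 + lam * (xw.2 - x.2))
                = lam * (2 * x.2 - (xb.2 + xw.2)) by ring.
      by rewrite m2 subrr mulr0.
    rewrite hc in hyc Pc.
    have -> : X `&` pixel d (k + i) (l + j) = set0.
      apply/seteqP; split => // y [Xy Py].
      have hle := hyc y Py.
      have hby : bdry X y.
        split; first exact: subset_closure.
        move=> iy.
        have hy : dist2 y xw <= r ^+ 2.
          by apply: (@conv_ball _ x xw y lam) => //; rewrite lr.
        have cl := @ecball_closure _ xw r r0 y hy.
        have [z [ez Xz]] := cl X iy.
        exact: hw z ez Xz.
      case: (ltrP (dist2 y (x.1 + lam * (xw.1 - x.1), x.2 + lam * (xw.2 - x.2))) (2 * d ^+ 2)) => hlt.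
        have h : dist2 y xw < r ^+ 2.
          by apply: (@conv_ball_lt _ x xw y lam) => //; rewrite lr.
        exact: (hw y h Xy).
      move/pixelE: Pc => [c1 c2].
      move/pixelE: Py => [y1 y2].
      have q1 := @coord_sq _ _ _ _ _ y1 c1.
      have q2 := @coord_sq _ _ _ _ _ y2 c2.
      move: hle hlt q1 q2; rewrite /dist2 /= => hle hlt q1 q2.
      have e1 : (y.1 - (x.1 + lam * (xw.1 - x.1))) ^+ 2 = d ^+ 2 by apply/eqP; rewrite eq_le; apply/andP; split; lra.
      have e2 : (y.2 - (x.2 + lam * (xw.2 - x.2))) ^+ 2 = d ^+ 2 by apply/eqP; rewrite eq_le; apply/andP; split; lra.
      have a1 := @coord_eq _ _ _ _ _ d0 y1 c1 e1.
      have a2 := @coord_eq _ _ _ _ _ d0 y2 c2 e2.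
      exact: (lat _ _ y a1 a2 hby).
    exact: area0.
exists i, j; split => //.
apply/eqP => -[i0 j0]; apply: ng; rewrite i0 j0 !addr0; exact: g.
Qed.
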